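(* Let $R$ be a ring with identity, ${}_RM$ a left $R$-module, $\varphi:M\to M$ a nilpotent $R$-endomorphism, and $\{x_{\gamma,i}\mid\gamma\in\Gamma,1\le i\le k_\gamma\}$ a nilpotent Jordan normal base of ${}_RM$ with respect to $\varphi$. Define $\Phi:\coprod_{\gamma\in\Gamma}R[t]\to M$ by $\Phi(\mathbf f)=\sum_{\gamma\in\Gamma}f_\gamma(t)\ast x_{\gamma,1}$ for $\mathbf f=(f_\gamma(t))_{\gamma\in\Gamma}$. Then $\Phi$ is a surjective homomorphism of left $R[t]$-modules, $\varphi(\Phi(\mathbf f))=\Phi(t\mathbf f)$ for all $\mathbf f\in\coprod_{\gamma\in\Gamma}R[t]$, and \[\coprod_{\gamma\in\Gamma}\bigl(J(R)[t]+(t^{k_\gamma})\bigr)\subseteq\ker(\Phi),\] where the left-hand side is the set of $\mathbf f$ in the copower with $f_\gamma(t)\in J(R)[t]+(t^{k_\gamma})$ for every $\gamma$; moreover $\ker(\Phi)$ is a left ideal of the direct power ring $\prod_{\gamma\in\Gamma}R[t]$ (i.e. $\mathbf g\mathbf f\in\ker(\Phi)$ for all $\mathbf g\in\prod_{\gamma}R[t]$ and $\mathbf f\in\ker(\Phi)$), and hence of the copower ring.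
   Context: A nilpotent Jordan normal base of ${}_RM$ with respect to $\varphi$ is a subset $\{x_{\gamma,i}\mid\gamma\in\Gamma,1\le i\le k_\gamma\}$ (integers $k_\gamma\ge1$) such that each $Rx_{\gamma,i}$ is simple, $M=\bigoplus_{\gamma,i}Rx_{\gamma,i}$, $\varphi(x_{\gamma,i})=x_{\gamma,i+1}$ for $1\le i<k_\gamma$, $\varphi(x_{\gamma,k_\gamma})=0$, and $\{k_\gamma\}$ is bounded. $R[t]$ is the polynomial ring in a central (commuting) indeterminate $t$; $J(R)$ is the Jacobson radical and $J(R)[t]$ the polynomials with coefficients in $J(R)$; $(t^k)=R[t]t^k$. $M$ is a left $R[t]$-module via $(a_1+a_2t+\cdots+a_{n+1}t^n)\ast u=a_1u+a_2\varphi(u)+\cdots+a_{n+1}\varphi^n(u)$. The copower $\coprod_{\gamma\in\Gamma}R[t]$ is the ideal of the direct power ring $\prod_{\gamma\in\Gamma}R[t]$ consisting of elements with finitely many nonzero coordinates; $R[t]$ acts on both by left multiplication in each coordinate. *)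

(* Defs.v *)
From HB Require Import structures.
From mathcomp Require Import all_boot all_order all_algebra.
From mathcomp Require Import finmap boolp classical_sets functions cardinality fsbigop.
Set Implicit Arguments. Unset Strict Implicit. Unset Printing Implicit Defensive.
Import Order.TTheory GRing.Theory.
Local Open Scope classical_set_scope.
Local Open Scope ring_scope.

Definition left_ideal (R : nzRingType) (I : set R) : Prop :=
  I 0 /\ (forall a b, I a -> I b -> I (a + b)) /\ (forall r a, I a -> I (r * a)).

Definition maximal_left_ideal (R : nzRingType) (I : set R) : Prop :=
  left_ideal I /\ ~ I 1 /\
  (forall I' : set R, left_ideal I' -> I `<=` I' -> I' = I \/ I' 1).

Definition jacobson (R : nzRingType) : set R :=
  [set a | forall I : set R, maximal_left_ideal I -> I a].

(* J(R)[t] + (t^k) inside R[t], where (t^k) = R[t] t^k. *)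
Definition jac_plus_tpow (R : nzRingType) (k : nat) : set {poly R} :=
  [set p | exists (a b : {poly R}),
      (forall i, @jacobson R a`_i) /\ p = a + b * 'X^k].

Definition submodule (R : nzRingType) (M : lmodType R) (S : set M) : Prop :=
  S 0 /\ (forall u v, S u -> S v -> S (u + v)) /\ (forall (r : R) u, S u -> S (r *: u)).

Definition cyclic_sub (R : nzRingType) (M : lmodType R) (x : M) : set M :=
  [set y | exists r : R, y = r *: x].

Definition simple_cyclic (R : nzRingType) (M : lmodType R) (x : M) : Prop :=
  cyclic_sub x <> [set 0] /\
  (forall S : set M, submodule S -> S `<=` cyclic_sub x ->
     S = [set 0] \/ S = cyclic_sub x).

Definition jindex (Γ : Type) (k : Γ -> nat) : set {classic (Γ * nat)%type} :=
  [set p | (1 <= p.2 <= k p.1)%N].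

Definition fin_family (R : nzRingType) (M : lmodType R) (Γ : Type) (k : Γ -> nat)
  (x : Γ -> nat -> M) (c : Γ -> nat -> R) : Prop :=
  finite_set (jindex k `&` [set p | c p.1 p.2 *: x p.1 p.2 != 0]).

Definition family_sum (R : nzRingType) (M : lmodType R) (Γ : Type) (k : Γ -> nat)
  (x : Γ -> nat -> M) (c : Γ -> nat -> R) : M :=
  \sum_(p \in jindex k) (c p.1 p.2 *: x p.1 p.2).

(* M is the (internal) direct sum of the submodules R x_{gamma,i}. *)
Definition direct_sum_decomp (R : nzRingType) (M : lmodType R) (Γ : Type)
  (k : Γ -> nat) (x : Γ -> nat -> M) : Prop :=
  (forall m : M, exists c, fin_family k x c /\ m = family_sum k x c) /\
  (forall c, fin_family k x c -> family_sum k x c = 0 ->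
     forall p, jindex k p -> c p.1 p.2 *: x p.1 p.2 = 0).

Definition nilpotent_endo (R : nzRingType) (M : lmodType R) (phi : M -> M) : Prop :=
  exists n : nat, forall u, iter n phi u = 0.

(* Nilpotent Jordan normal base {x_{gamma,i} | gamma in Γ, 1 <= i <= k gamma}
   (indices i are 1-based, as in the paper). *)
Definition nilpotent_jordan_base (R : nzRingType) (M : lmodType R) (phi : M -> M)
  (Γ : Type) (k : Γ -> nat) (x : Γ -> nat -> M) : Prop :=
  (forall g, (1 <= k g)%N) /\
  (forall g i, (1 <= i <= k g)%N -> simple_cyclic (x g i)) /\
  direct_sum_decomp k x /\
  (forall g i, (1 <= i < k g)%N -> phi (x g i) = x g i.+1) /\
  (forall g, phi (x g (k g)) = 0) /\
  (exists N : nat, forall g, (k g <= N)%N).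

Definition tact (R : nzRingType) (M : lmodType R) (phi : M -> M)
  (f : {poly R}) (u : M) : M :=
  \sum_(i < size f) (f`_i *: iter i phi u).

Definition in_copower (R : nzRingType) (Γ : Type) (f : Γ -> {poly R}) : Prop :=
  finite_set [set g | f g != 0].

Definition PhiJ (R : nzRingType) (M : lmodType R) (phi : M -> M) (Γ : Type)
  (x : Γ -> nat -> M) (f : Γ -> {poly R}) : M :=
  \sum_(g \in [set: {classic Γ}]) tact phi (f g) (x g 1%N).

(* Main.v *)
Require Import Defs.
From HB Require Import structures.
From mathcomp Require Import all_boot all_order all_algebra.
From mathcomp Require Import finmap boolp classical_sets functions cardinality fsbigop.
Import GRing.Theory.
Local Open Scope classical_set_scope.
Local Open Scope ring_scope.
Section Tact.
Variables (R : nzRingType) (M : lmodType R) (phi : {linear M -> M}).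

Lemma iterD i (u v : M) : iter i phi (u + v) = iter i phi u + iter i phi v.
Proof. by elim: i => //= i ->; rewrite linearD. Qed.
Lemma iter0 i : iter i phi (0 : M) = 0.
Proof. by elim: i => //= i ->; rewrite linear0. Qed.
Lemma iterZ i (r : R) (v : M) : iter i phi (r *: v) = r *: iter i phi v.
Proof. by elim: i => //= i ->; rewrite linearZZ. Qed.
Lemma iter_phi i (v : M) : phi (iter i phi v) = iter i phi (phi v).
Proof. by rewrite -iterS iterSr. Qed.

Lemma sum_widen (a m : nat) (F : nat -> M) : (a <= m)%N ->
  (forall i, (a <= i)%N -> (i < m)%N -> F i = 0) ->
  \sum_(i < a) F i = \sum_(i < m) F i.
Proof.
move=> am H; rewrite (big_ord_widen _ _ am) [RHS](bigID (fun i : 'I_m => (i < a)%N)) /=.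
rewrite [X in _ = _ + X]big1 ?addr0 // => i; rewrite -leqNgt => ai.
by apply: H.
Qed.

Lemma tact_gen n (p : {poly R}) (u : M) :
  (forall i, (n <= i)%N -> p`_i *: iter i phi u = 0) ->
  tact phi p u = \sum_(i < n) p`_i *: iter i phi u.
Proof.
move=> H; rewrite /tact.
rewrite (@sum_widen (size p) (maxn n (size p)) (fun i => p`_i *: iter i phi u)) ?leq_maxr //; last first.
  by move=> i pi _; rewrite nth_default // scale0r.
rewrite [RHS](@sum_widen n (maxn n (size p)) (fun i => p`_i *: iter i phi u)) ?leq_maxl //.
by move=> i ni _; apply: H.
Qed.

Lemma tact_wide n (p : {poly R}) (u : M) : (size p <= n)%N ->
  tact phi p u = \sum_(i < n) p`_i *: iter i phi u.
Proof.
move=> sn; apply: tact_gen => i ni; rewrite nth_default ?scale0r //.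
exact: leq_trans ni.
Qed.

Lemma tact0p (u : M) : tact phi 0 u = 0.
Proof. by rewrite /tact size_poly0 big_ord0. Qed.

Lemma tactp0 (p : {poly R}) : tact phi p 0 = 0.
Proof. by rewrite /tact big1 // => i _; rewrite iter0 scaler0. Qed.

Lemma tactD (p q : {poly R}) (u : M) :
  tact phi (p + q) u = tact phi p u + tact phi q u.
Proof.
set n := maxn (size p) (size q).
rewrite !(@tact_wide n) ?leq_maxl ?leq_maxr //; last first.
  by rewrite (leq_trans (size_polyD _ _)).
by rewrite -big_split /=; apply: eq_bigr => i _; rewrite coefD scalerDl.
Qed.

Lemma tactDr (p : {poly R}) (u v : M) :
  tact phi p (u + v) = tact phi p u + tact phi p v.
Proof.
by rewrite /tact -big_split /=; apply: eq_bigr => i _; rewrite iterD scalerDr.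
Qed.

Lemma tact_sum (p : {poly R}) (I : Type) (r : seq I) (F : I -> M) :
  tact phi p (\sum_(i <- r) F i) = \sum_(i <- r) tact phi p (F i).
Proof.
elim: r => [|a r IH]; first by rewrite !big_nil tactp0.
by rewrite !big_cons tactDr IH.
Qed.

Lemma tact_phi (p : {poly R}) (u : M) : phi (tact phi p u) = tact phi p (phi u).
Proof.
rewrite /tact linear_sum; apply: eq_bigr => i _.
by rewrite linearZZ iter_phi.
Qed.

Lemma tactMX (q : {poly R}) (u : M) : tact phi (q * 'X) u = tact phi q (phi u).
Proof.
rewrite (@tact_wide (size q).+1); last first.
  by rewrite (leq_trans (size_polyMleq _ _)) // size_polyX addn2.
rewrite big_ord_recl /= coefMX eqxx scale0r add0r (@tact_wide (size q)) //.
by apply: eq_bigr => i _; rewrite coefMX /= add0n iter_phi.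
Qed.

Lemma tactCM (c : R) (q : {poly R}) (u : M) :
  tact phi (c%:P * q) u = c *: tact phi q u.
Proof.
rewrite (@tact_wide (size q)); last first.
  by rewrite (leq_trans (size_polyMleq _ _)) // size_polyC; case: (c != 0); rewrite /= ?add1n ?add0n ?leq_pred.
rewrite /tact scaler_sumr; apply: eq_bigr => i _; by rewrite coefCM scalerA.
Qed.

Lemma tactC (c : R) (u : M) : tact phi c%:P u = c *: u.
Proof. by rewrite -[c%:P]mulr1 tactCM (@tact_wide 1) ?size_poly1 // big_ord1 coef1 scale1r. Qed.

Lemma tactM (p q : {poly R}) (u : M) :
  tact phi (p * q) u = tact phi p (tact phi q u).
Proof.
elim/poly_ind: p q => [|p c IH] q; first by rewrite mul0r !tact0p.
rewrite mulrDl -mulrA -(commr_polyX q) mulrA.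
rewrite tactD tactCM -mulrA IH tactMX tactD tactMX tactC.
by rewrite tact_phi.
Qed.
Lemma tactX (u : M) : tact phi 'X u = phi u.
Proof. by have := tactMX 1 u; rewrite mul1r => ->; rewrite -polyC1 tactC scale1r. Qed.
End Tact.
Lemma jac_ann (R : nzRingType) (M : lmodType R) (x0 : M) :
  simple_cyclic x0 -> forall j, jacobson j -> j *: x0 = 0.
Proof.
move=> [nz smp] j Jj.
pose I := [set r : R | r *: x0 = 0].
apply: (Jj I); split; [|split].
- split; first by rewrite /I /= scale0r.
  split; first by move=> a b; rewrite /I /= => Ha Hb; rewrite scalerDl Ha Hb addr0.
  by move=> r a; rewrite /I /= => Ha; rewrite -scalerA Ha scaler0.
- rewrite /I /= scale1r => x00; apply: nz; rewrite x00.
  apply/seteqP; split=> y /=; first by move=> [r ->]; rewrite scaler0.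
  by move=> ->; exists 0; rewrite scaler0.
- move=> I' [I'0 [I'D I'M]] II'.
  pose S := [set y : M | exists r, I' r /\ y = r *: x0].
  have subS : submodule S.
    split; first by exists 0; rewrite scale0r.
    split; first by move=> u v [a [Ia ->]] [b [Ib ->]]; exists (a + b); rewrite scalerDl; split=> //; apply: I'D.
    by move=> r u [a [Ia ->]]; exists (r * a); rewrite scalerA; split=> //; apply: I'M.
  have Sc : S `<=` cyclic_sub x0 by move=> y [r [_ ->]]; exists r.
  case: (smp S subS Sc) => HS.
  + left; apply/seteqP; split=> r Hr //; last by apply: II'.
    have : S (r *: x0) by exists r.
    by rewrite HS.
  + right; have : S x0 by rewrite HS; exists 1; rewrite scale1r.
    move=> [r [Ir Hx]].
    have H1 : I (1 - r) by rewrite /I /= scalerBl scale1r -Hx subrr.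
    have := I'D _ _ (II' _ H1) Ir.
    by rewrite subrK.
Qed.
Section Main.
Variables (R : nzRingType) (M : lmodType R) (phi : {linear M -> M})
  (Γ : Type) (k : Γ -> nat) (x : Γ -> nat -> M).
Hypothesis Hjb : nilpotent_jordan_base phi k x.

Lemma iter_x g i : (i < k g)%N -> iter i phi (x g 1%N) = x g i.+1.
Proof.
case: Hjb => _ [_ [_ [Hs _]]].
elim: i => [//|i IH] Hi /=; rewrite IH ?(ltnW Hi) //.
by apply: Hs; rewrite Hi andbT.
Qed.

Lemma iter_k g i : (k g <= i)%N -> iter i phi (x g 1%N) = 0.
Proof.
case: Hjb => k1 [_ [_ [_ [Hz _]]]].
elim: i => [|i IH] Hi; first by have := k1 g; rewrite leqNgt; move: Hi; case: (k g).
rewrite iterS; case: (ltngtP (k g) i.+1) Hi => // [kl|ke] _.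
  by rewrite IH ?linear0 //.
have := k1 g; rewrite ke ltnS => _.
by rewrite iter_x ?ke // -ke Hz.
Qed.

Lemma tact_x g (p : {poly R}) N : (k g <= N)%N ->
  tact phi p (x g 1%N) = \sum_(i < N) (if (i < k g)%N then p`_i *: x g i.+1 else 0).
Proof.
move=> kN; rewrite (@tact_gen _ _ _ N); last first.
  by move=> i Ni; rewrite iter_k ?scaler0 // (leq_trans kN).
apply: eq_bigr => i _; case: ifP => ik; first by rewrite iter_x.
by rewrite iter_k ?scaler0 // leqNgt ik.
Qed.

Lemma Phi_fin (f : Γ -> {poly R}) (G : set {classic Γ}) : finite_set G ->
  [set g | f g != 0] `<=` G ->
  PhiJ phi x f = \sum_(g <- fset_set G) tact phi (f g) (x g 1%N).
Proof.
move=> Gf sG; rewrite /PhiJ -(fsbig_widen G) //; first by rewrite fsbig_finite.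
move=> g [_ nG] /=; case: (f g =P 0) => [->|/eqP fg]; first by rewrite tact0p.
by exfalso; apply: nG; apply: sG.
Qed.

Lemma fin_fam (f : Γ -> {poly R}) (G : set {classic Γ}) N : finite_set G ->
  [set g | f g != 0] `<=` G -> (forall g, (k g <= N)%N) ->
  fin_family k x (fun g j => (f g)`_j.-1).
Proof.
move=> Gf sG kN; rewrite /fin_family.
apply: (@sub_finite_set _ _ (G `*` `I_N.+1)); last by apply: finite_setX => //; apply: finite_II.
move=> [g j] [/= /andP [j1 jk] nz]; split => /=.
  apply: sG => /=; apply/eqP => fg; move: nz; rewrite fg coef0 scale0r eqxx //.
by rewrite ltnS (leq_trans jk).
Qed.

Lemma Phi_family (f : Γ -> {poly R}) (G : set {classic Γ}) N : finite_set G ->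
  [set g | f g != 0] `<=` G -> (forall g, (k g <= N)%N) ->
  PhiJ phi x f = family_sum k x (fun g j => (f g)`_j.-1).
Proof.
move=> Gf sG kN.
pose F (g : Γ) (j : nat) := if (1 <= j <= k g)%N then (f g)`_j.-1 *: x g j else 0.
have E1 : PhiJ phi x f = \sum_(g \in G) \sum_(j \in `I_N.+1) F g j.
  rewrite /PhiJ -(fsbig_widen G); last 2 first.
  - by [].
  - move=> g [_ nG] /=; case: (f g =P 0) => [->|/eqP fg]; first by rewrite tact0p.
    by exfalso; apply: nG; apply: sG.
  apply: eq_fsbigr => g _.
  rewrite -fsbig_ord big_ord_recl (@tact_x g (f g) N (kN g)) /F /= add0r.
  by apply: eq_bigr => i _.
rewrite E1 pair_fsbig //.
rewrite /family_sum fsbig_mkcond [RHS]fsbig_mkcond.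
rewrite (reindex_fsbigT (id : {classic (Γ*nat)} -> ({classic Γ} * nat)%type)); last by exists id.
apply: eq_fsbigr => -[g j] _; rewrite /patch /F /=.
have [Hp|Hp] := pselect (jindex k (g, j)).
  rewrite (mem_set Hp); move: (Hp); rewrite /jindex /= => ->.
  have [Hq|Hq] := pselect ((G `*` `I_N.+1) (g, j)); first by rewrite (mem_set Hq).
  rewrite (memNset Hq); have [->//|nz] := eqVneq ((f g)`_j.-1 *: x g j) 0.
  exfalso; apply: Hq; split => /=.
    apply: sG => /=; apply/eqP => fg; move: nz; rewrite fg coef0 scale0r eqxx //.
  by move: Hp; rewrite /jindex /= => /andP [_ jk]; rewrite ltnS (leq_trans jk).
rewrite (memNset Hp); move: Hp; rewrite /jindex /= => /negP /negbTE ->.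
by case: ifP.
Qed.

Lemma ker_coord (f : Γ -> {poly R}) : in_copower f -> PhiJ phi x f = 0 ->
  forall g, tact phi (f g) (x g 1%N) = 0.
Proof.
move=> cf Pf0 g.
have [N kN] : exists N, forall g, (k g <= N)%N by case: Hjb => _ [_ [_ [_ [_ H]]]].
have sG : [set g | f g != 0] `<=` ([set g | f g != 0] : set {classic Γ}) by [].
have Hf := @fin_fam f _ N cf sG kN.
rewrite (@Phi_family f _ N cf sG kN) in Pf0.
case: Hjb => _ [_ [[_ Hind] _]].
have H := Hind _ Hf Pf0.
rewrite (@tact_x g (f g) N (kN g)) big1 // => i _; case: ifP => // ik.
by have := H (g, i.+1); rewrite /jindex /= ik => ->.
Qed.

Lemma tactXn n (u : M) : tact phi ('X^n) u = iter n phi u.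
Proof.
elim: n u => [|n IH] u; first by rewrite expr0 -polyC1 tactC scale1r.
by rewrite exprSr tactMX IH iterSr.
Qed.

Lemma jac_term c (p : {poly R}) : jac_plus_tpow (k c) p -> tact phi p (x c 1%N) = 0.
Proof.
move=> [a [b [Ja ->]]].
have [k1 [Hs _]] := Hjb.
have sc : simple_cyclic (x c 1%N) by apply: Hs; rewrite /= k1.
rewrite tactD tactM tactXn iter_k // tactp0 addr0 /tact big1 // => i _.
by rewrite -iterZ (@jac_ann R M _ sc _ (Ja i)) iter0.
Qed.

End Main.
Theorem theorem3p1 (R : nzRingType) (M : lmodType R) (phi : {linear M -> M})
  (Γ : Type) (k : Γ -> nat) (x : Γ -> nat -> M) :
  nilpotent_endo phi ->
  nilpotent_jordan_base phi k x ->
  let Phi := PhiJ phi x in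
  (* Phi is a homomorphism of left R[t]-modules *)
  (forall f g : Γ -> {poly R}, in_copower f -> in_copower g ->
     Phi (fun c => f c + g c) = Phi f + Phi g) /\
  (forall (h : {poly R}) (f : Γ -> {poly R}), in_copower f ->
     Phi (fun c => h * f c) = tact phi h (Phi f)) /\
  (* Phi is surjective *)
  (forall m : M, exists f : Γ -> {poly R}, in_copower f /\ Phi f = m) /\
  (* phi (Phi f) = Phi (t f) *)
  (forall f : Γ -> {poly R}, in_copower f ->
     phi (Phi f) = Phi (fun c => 'X * f c)) /\
  (* coprod_γ (J(R)[t] + (t^{k_γ})) ⊆ ker Phi *)
  (forall f : Γ -> {poly R}, in_copower f ->
     (forall c, @jac_plus_tpow R (k c) (f c)) -> Phi f = 0) /\
  (* ker Phi is a left ideal of the direct power ring prod_γ R[t] *)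
  (Phi (fun _ => 0) = 0 /\
   (forall f g : Γ -> {poly R}, in_copower f -> in_copower g ->
      Phi f = 0 -> Phi g = 0 -> Phi (fun c => f c + g c) = 0) /\
   (forall g f : Γ -> {poly R}, in_copower f -> Phi f = 0 ->
      Phi (fun c => g c * f c) = 0)) /\
  (* ... and hence of the copower ring *)
  (forall g f : Γ -> {poly R}, in_copower g -> in_copower f -> Phi f = 0 ->
      Phi (fun c => g c * f c) = 0).
Proof.
move=> _ Hjb Phi.
have [N kN] : exists N, forall g, (k g <= N)%N by case: Hjb => _ [_ [_ [_ [_ H]]]].
have Padd : forall f g : Γ -> {poly R}, in_copower f -> in_copower g ->
     Phi (fun c => f c + g c) = Phi f + Phi g.
  move=> f g cf cg.
  pose G : set {classic Γ} := [set c | f c != 0] `|` [set c | g c != 0].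
  have Gf : finite_set G by rewrite /G finite_setU.
  rewrite /Phi (@Phi_fin R M phi Γ x f G Gf); last by move=> c; left.
  rewrite (@Phi_fin R M phi Γ x g G Gf); last by move=> c; right.
  rewrite (@Phi_fin R M phi Γ x _ G Gf); last first.
    move=> c /= fg; apply: contrapT => /not_orP [].
    move=> /negP /negPn /eqP f0 /negP /negPn /eqP g0.
    by move: fg; rewrite f0 g0 addr0 eqxx.
  by rewrite -big_split; apply: eq_bigr => c _; rewrite tactD.
have Pker := @ker_coord R M phi Γ k x Hjb.
have Pmulker : forall g f : Γ -> {poly R}, in_copower f -> Phi f = 0 ->
      Phi (fun c => g c * f c) = 0.
  move=> g f cf Pf; rewrite /Phi /PhiJ fsbig1 // => c _.
  by rewrite tactM (Pker f cf Pf c) tactp0.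
have Phi0 : Phi (fun _ => 0) = 0 by rewrite /Phi /PhiJ fsbig1 // => c _; rewrite tact0p.
split; first exact: Padd.
split.
  move=> h f cf.
  rewrite /Phi (@Phi_fin R M phi Γ x f _ cf) // (@Phi_fin R M phi Γ x (fun c => h * f c) _ cf); last first.
    by move=> c /= hf; apply/eqP => f0; move: hf; rewrite f0 mulr0 eqxx.
  by rewrite tact_sum; apply: eq_bigr => c _; rewrite tactM.
split.
  move=> m.
  have [_ [_ [[Hsurj _] _]]] := Hjb.
  have [c [cf ->]] := Hsurj m.
  pose S : set {classic (Γ * nat)} := jindex k `&` [set p | c p.1 p.2 *: x p.1 p.2 != 0].
  pose f (g : Γ) : {poly R} := \poly_(i < N) (if (g, i.+1) \in S then c g i.+1 else 0).
  pose G : set {classic Γ} := fst @` S.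
  have Gf : finite_set G by apply: finite_image.
  have sG : [set g | f g != 0] `<=` G.
    move=> g /= fg; apply: contrapT => nG; move: fg; apply/negP; rewrite negbK.
    apply/eqP/polyP => i; rewrite coef_poly coef0.
    case: ifP => // _; case: ifP => // /set_mem Sg.
    by exfalso; apply: nG; exists (g, i.+1).
  exists f; split; first exact: (sub_finite_set sG Gf).
  rewrite /Phi (@Phi_family R M phi Γ k x Hjb f G N Gf sG kN).
  rewrite /family_sum; apply: eq_fsbigr => -[g j] /set_mem Hp /=.
  rewrite coef_poly.
  have Hp' := Hp; move: Hp'; rewrite /jindex /= => /andP [j1 jk].
  rewrite ifT; last by rewrite prednK // (leq_trans jk).
  rewrite prednK //.
  have [Sp|Sp] := pselect (S (g, j)); first by rewrite (mem_set Sp).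
  rewrite (memNset Sp) scale0r.
  have [//|nz] := eqVneq (c g j *: x g j) 0.
  by exfalso; apply: Sp; split.
split.
  move=> f cf; rewrite /Phi (@Phi_fin R M phi Γ x f _ cf) // (@Phi_fin R M phi Γ x (fun c => 'X * f c) _ cf); last first.
    by move=> c /= hf; apply/eqP => f0; move: hf; rewrite f0 mulr0 eqxx.
  rewrite linear_sum; apply: eq_bigr => c _.
  by rewrite tactM tactX.
split.
  move=> f cf Hf; rewrite /Phi /PhiJ fsbig1 // => c _.
  exact: (@jac_term R M phi Γ k x Hjb c _ (Hf c)).
split; first by split; [exact: Phi0 | split; [|exact: Pmulker]];
  move=> f g cf cg Pf Pg; rewrite Padd // Pf Pg addr0.
by move=> g f _ cf Pf; apply: Pmulker.
Qed.
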